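(* Let $P$ be a path from $u$ to $v$ and $x\in P\setminus\{u,v\}$. Then the length of the $\epsilon_2$-segment containing $x$ satisfies $|\mathrm{seg}(x,P)|\le\epsilon_2\cdot\min\{|P[u,x]|,|P[x,v]|\}$.
   Context: Let $G$ be an undirected graph with real edge weights in $[1,W]$, and let $\epsilon_2>0$. For a path $P$ and vertices $a,b$ on it, $P[a,b]$ is the subpath between them and $|Q|$ denotes the (weighted) length of a path $Q$. For a path $P=(u=v_0,v_1,\dots,v_\ell=v)$ and $1\le i,j<\ell$, the vertices $v_i,v_j$ are in the same $\epsilon_2$-segment if either (1) $|P[u,v_i]|,|P[u,v_j]|\le|P|/2$ and $\lfloor\log_{1+\epsilon_2}|P[u,v_i]|\rfloor=\lfloor\log_{1+\epsilon_2}|P[u,v_j]|\rfloor$, or (2) $|P[v_i,v]|,|P[v_j,v]|<|P|/2$ and $\lfloor\log_{1+\epsilon_2}|P[v_i,v]|\rfloor=\lfloor\log_{1+\epsilon_2}|P[v_j,v]|\rfloor$. This is an equivalence relation whose classes are contiguous subpaths; $u$ and $v$ belong to no segment. For $x\in P\setminus\{u,v\}$, $\mathrm{seg}(x,P)=P[v_l,v_r]$ where $v_l,v_r$ are the vertices of $x$'s class closest to $u$ and to $v$ respectively. *)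

(* Defs.v *)
From mathcomp Require Import all_boot all_order all_algebra.
From mathcomp Require Import all_classical all_reals all_analysis.
Set Implicit Arguments. Unset Strict Implicit. Unset Printing Implicit Defensive.
Import Order.TTheory GRing.Theory Num.Theory.
Local Open Scope ring_scope.

Section PathSeg.
Variables (R : realType) (V : eqType) (w : V -> V -> R).

(* A path is represented as the vertex sequence  u :: t = (v_0 = u, v_1, ..., v_l),
   with l = size t and v_l = last u t.  Vertex v_k is  nth u (u :: t) k. *)
Definition pvert (u : V) (t : seq V) (k : nat) : V := nth u (u :: t) k.

Definition plen (u : V) (t : seq V) (a b : nat) : R :=
  \sum_(a <= k < b) w (pvert u t k) (pvert u t k.+1).

Definition ptot (u : V) (t : seq V) : R := plen u t 0 (size t).

Definition flog (eps y : R) : int := Num.floor (ln y / ln (1 + eps)).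

Definition same_seg (eps : R) (u : V) (t : seq V) (i j : nat) : bool :=
  let L := ptot u t in
  let l := size t in
  [&& (0 < i < l)%N, (0 < j < l)%N &
   ((plen u t 0 i <= L / 2) && (plen u t 0 j <= L / 2) &&
      (flog eps (plen u t 0 i) == flog eps (plen u t 0 j)))
   || ((plen u t i l < L / 2) && (plen u t j l < L / 2) &&
      (flog eps (plen u t i l) == flog eps (plen u t j l)))].

Definition seg_left (eps : R) (u : V) (t : seq V) (i : nat) : nat :=
  \big[minn/i]_(j < size t | same_seg eps u t i j) j.
Definition seg_right (eps : R) (u : V) (t : seq V) (i : nat) : nat :=
  \big[maxn/i]_(j < size t | same_seg eps u t i j) j.

Definition seg_len (eps : R) (u : V) (t : seq V) (i : nat) : R :=
  plen u t (seg_left eps u t i) (seg_right eps u t i).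

End PathSeg.

(* Main.v *)
Require Import Defs.
From mathcomp Require Import all_boot all_order all_algebra.
From mathcomp Require Import all_classical all_reals all_analysis.
From mathcomp Require Import lra.
Import Order.TTheory GRing.Theory Num.Theory.
Local Open Scope ring_scope.

Lemma key (R : realType) (e y1 y2 : R) : 0 < e -> 0 < y1 -> y1 <= y2 ->
  flog e y1 = flog e y2 -> y2 - y1 < e * y1.
Proof.
move=> e0 y10 y12; rewrite /flog => hf.
have y20 : 0 < y2 by apply: lt_le_trans y12.
set c := ln (1 + e).
have c0 : 0 < c by apply: ln_gt0; lra.
have h1 := floor_le (ln y1 / c).
have h2 := floorD1_gt (ln y2 / c).
rewrite -hf intrD in h2.
have h3 : ln y2 / c < ln y1 / c + 1 by apply: lt_le_trans h2 _; rewrite lerD2r.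
have h4 : ln y2 < ln y1 + c.
  have E1 : ln y1 = (ln y1 / c) * c by rewrite mulfVK // gt_eqF.
  have E2 : ln y2 = (ln y2 / c) * c by rewrite mulfVK // gt_eqF.
  rewrite E1 E2; move: h3; set a := ln y2 / c; set b := ln y1 / c => h3; nra.
have h5 : ln y2 < ln (y1 * (1 + e)).
  rewrite lnM // ?posrE //; lra.
rewrite ltr_ln ?posrE // in h5; last by apply: mulr_gt0; lra.
lra.
Qed.

Section Aux.
Variables (R : realType) (V : finType) (adj : rel V) (w : V -> V -> R) (u : V) (t : seq V).
Hypothesis hw : forall a b, adj a b -> 1 <= w a b.
Hypothesis hp : path adj u t.

Lemma plen_cat a b c : (a <= b <= c)%N -> plen w u t a c = plen w u t a b + plen w u t b c.
Proof. by move=> /andP[ab bc]; rewrite /plen (@big_cat_nat _ _ _ b). Qed.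

Lemma wk k : (k < size t)%N -> 1 <= w (pvert u t k) (pvert u t k.+1).
Proof. by move=> kt; apply: hw; rewrite /pvert /=; move/(pathP u): hp; apply. Qed.

Lemma plen_ge0 a b : (b <= size t)%N -> 0 <= plen w u t a b.
Proof.
move=> bt; rewrite /plen big_nat_cond; apply: sumr_ge0 => k /andP[/andP[_ kb] _].
have := @wk k (leq_trans kb bt); lra.
Qed.

Lemma plen_ge1 a b : (a < b <= size t)%N -> 1 <= plen w u t a b.
Proof.
move=> /andP[ab bt]; rewrite /plen big_ltn //.
have := @wk a (leq_trans ab bt); have := @plen_ge0 a.+1 b bt; rewrite /plen.
move=> h1 h2; lra.
Qed.
End Aux.

Theorem lemma3p2 (R : realType) (V : finType) (adj : rel V) (w : V -> V -> R)
    (W eps2 : R) (u : V) (t : seq V) (i : nat) :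
  symmetric adj -> irreflexive adj ->
  (forall a b, adj a b -> w a b = w b a) ->
  (forall a b, adj a b -> 1 <= w a b <= W) ->
  0 < eps2 ->
  path adj u t -> uniq (u :: t) ->
  (0 < i < size t)%N ->
  seg_len w eps2 u t i <=
    eps2 * Num.min (plen w u t 0 i) (plen w u t i (size t)).
Proof.
move=> _ _ _ hW e0 hp _ hi.
have hw : forall a b, adj a b -> 1 <= w a b by move=> a b /hW /andP[].
set l := size t.
have cat := @plen_cat _ _ w u t.
have ge0 := @plen_ge0 _ _ _ _ _ _ hw hp.
have ge1 := @plen_ge1 _ _ _ _ _ _ hw hp.
have tot : forall j, (j <= l)%N -> ptot w u t = plen w u t 0 j + plen w u t j l.
  by move=> j jl; rewrite /ptot -/l (cat 0%N j l) //.
have sii : same_seg w eps2 u t i i.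
  rewrite /same_seg hi /= .
    rewrite (tot i); last by case/andP: hi => _ /ltnW.
    set a := plen w u t 0 i; set b := plen w u t i l.
    rewrite !eqxx !andbT !andbb.
    by case: (lerP a ((a + b) / 2)) => h //=; lra.
have hl : same_seg w eps2 u t i (seg_left w eps2 u t i) && (seg_left w eps2 u t i <= i)%N.
  rewrite /seg_left; apply: (big_rec (fun m => same_seg w eps2 u t i m && (m <= i)%N)).
  - by rewrite sii leqnn.
  - move=> j m hj /andP[hm mi]; rewrite /minn; case: ltnP => jm; last exact/andP.
    by rewrite hj /= (leq_trans (ltnW jm) mi).
have hr : same_seg w eps2 u t i (seg_right w eps2 u t i) && (i <= seg_right w eps2 u t i)%N.
  rewrite /seg_right; apply: (big_rec (fun m => same_seg w eps2 u t i m && (i <= m)%N)).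
  - by rewrite sii leqnn.
  - move=> j m hj /andP[hm mi]; rewrite /maxn; case: ltnP => jm; first exact/andP.
    by rewrite hj /= (leq_trans mi jm).
rewrite /seg_len.
move: hl hr; set a := seg_left w eps2 u t i; set b := seg_right w eps2 u t i.
move=> /andP[/and3P[_ /andP[a0 al] ha] ai] /andP[/and3P[_ /andP[b0 bl] hb] ib].
have il : (i < l)%N by case/andP: hi.
have i0 : (0 < i)%N by case/andP: hi.
have Ti := tot i (ltnW il); have Ta := tot a (ltnW al); have Tb := tot b (ltnW bl).
have Pab := cat 0%N a b; rewrite /= ?(leq_trans ai ib) in Pab; have {}Pab := Pab isT.
have Pai := cat 0%N a i; rewrite /= ai in Pai; have {}Pai := Pai isT.
have Sab := cat a b l; rewrite (leq_trans ai ib) ltnW // in Sab; have {}Sab := Sab isT.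
have Sib := cat i b l; rewrite ib ltnW // in Sib; have {}Sib := Sib isT.
have g1 := ge1 0%N a; rewrite a0 ltnW // in g1; have {}g1 := g1 isT.
have g2 := ge1 b l; rewrite bl leqnn in g2; have {}g2 := g2 isT.
have g3 := ge0 a b (ltnW bl).
have g4 := ge0 a i (ltnW il).
have g5 := ge0 i b (ltnW bl).
move: ha hb; rewrite /ptot -/l in Ti Ta Tb *.
set L := plen w u t 0 l in Ti Ta Tb *.
case: (lerP (plen w u t 0 i) (L / 2)) => hc.
- move=> /orP[/andP[/andP[_ _] fa]|/andP[/andP[h _] _]]; last by move=> *; lra.
  move=> /orP[/andP[/andP[_ _] fb]|/andP[/andP[h _] _]]; last by lra.
  have hab : plen w u t 0 a <= plen w u t 0 b by lra.
  have := @key _ _ _ _ e0 (lt_le_trans ltr01 g1) hab.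
  rewrite -(eqP fa) -(eqP fb) => /(_ erefl).
  rewrite min_l; last by lra.
  move=> hk; nra.
- move=> /orP[/andP[/andP[h _] _]|/andP[/andP[_ _] fa]]; first by lra.
  move=> /orP[/andP[/andP[h _] _]|/andP[/andP[_ _] fb]]; first by lra.
  have hab : plen w u t b l <= plen w u t a l by lra.
  have := @key _ _ _ _ e0 (lt_le_trans ltr01 g2) hab.
  rewrite -(eqP fa) -(eqP fb) => /(_ erefl).
  rewrite min_r; last by lra.
  move=> hk; nra.
Qed.
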